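(* For every $\epsilon>0$ there exists $k_0$ such that for every integer $k\ge k_0$ the following holds: if $N$ is a random variable with values in the positive integers, with $\mathrm E N<\infty$, whose distribution satisfies $\Pr(N=n)\le(3/8)^k|\mathcal Z|^{2n}$ for all positive integers $n$, then $H(N)/\mathrm E N\le\epsilon$. In particular, this holds for the stopping time $N$ of any zero-error variable-length $(k,N)$ network code for the network in the context with $k\ge k_0$.
   Context: $\mathcal Z$ is a fixed finite alphabet with $|\mathcal Z|\ge2$; $H(N)=-\sum_n\Pr(N=n)\log_2\Pr(N=n)$ is the Shannon entropy in bits. Network and codes: source nodes $s_1,s_2,s_3$, terminal $t$, edges $(s_3,s_1),(s_3,s_2),(s_1,t),(s_2,t)$; source $s_j$ observes $\mathbf X_j\in\{0,1\}^k$, all $3k$ bits i.i.d. uniform; $s_1,s_2$ also know $\mathbf X_3$. A variable-length $(k,N)$ network code consists of encoders $\phi_1,\phi_2:\{0,1\}^k\times\{0,1\}^k\to\mathcal Z^*$ producing sequences $\mathbf Z_1=\phi_1(\mathbf X_1,\mathbf X_3)$, $\mathbf Z_2=\phi_2(\mathbf X_2,\mathbf X_3)$, a positive-integer-valued stopping time $N$ for the sequence of pairs $(\mathbf Z_1(m),\mathbf Z_2(m))_{m\ge1}$, and a decoder producing $\hat{\boldsymbol\Sigma}=\psi(\mathbf Z_1^N,\mathbf Z_2^N)\in\{0,1,2,3\}^k$ with $\mathbf Z_j^N$ the first $N$ symbols of $\mathbf Z_j$. It is zero-error if $\Pr(\hat{\boldsymbol\Sigma}\ne\mathbf X_1+\mathbf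 X_2+\mathbf X_3)=0$ (componentwise integer sum). *)

(* Defs.v *)
From Stdlib Require Import Reals List Arith.
Import ListNotations.
Open Scope R_scope.

Definition log2 (x : R) : R := ln x / ln 2.
Definition plogp (x : R) : R := if Req_EM_T x 0 then 0 else x * log2 x.

(** A probability mass function [p] of a random variable N with values in the
    positive integers: p n = Pr(N = n), p 0 = 0, nonnegative, total mass 1. *)
Definition is_pmf_pos (p : nat -> R) : Prop :=
  p 0%nat = 0 /\ (forall n, 0 <= p n) /\ infinite_sum p 1.

(** E N = m  (in particular E N < infinity). *)
Definition mean_is (p : nat -> R) (m : R) : Prop :=
  infinite_sum (fun n => INR n * p n) m.

Definition entropy_is (p : nat -> R) (h : R) : Prop :=
  infinite_sum (fun n => - plogp (p n)) h.

Fixpoint bitvecs (k : nat) : list (list bool) :=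
  match k with
  | O => [[]]
  | S k' => flat_map (fun v => [false :: v; true :: v]) (bitvecs k')
  end.

Definition bitval (b : bool) : nat := if b then 1%nat else 0%nat.

Fixpoint sum3 (x1 x2 x3 : list bool) : list nat :=
  match x1, x2, x3 with
  | b1 :: r1, b2 :: r2, b3 :: r3 =>
      (bitval b1 + bitval b2 + bitval b3)%nat :: sum3 r1 r2 r3
  | _, _, _ => []
  end.

(** Source outcomes ((X1, X2), X3), uniformly distributed over {0,1}^(3k). *)
Definition sources (k : nat) : list (list bool * list bool * list bool) :=
  list_prod (list_prod (bitvecs k) (bitvecs k)) (bitvecs k).

(** A variable-length (k, N) network code over alphabet A:
    encoders phi1, phi2 : {0,1}^k x {0,1}^k -> A^*, a stopping rule giving N
    as a function of the pair of sequences (Z1, Z2), and a decoder psi. *)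
Record vl_code (A : Type) (k : nat) : Type := {
  phi1 : list bool -> list bool -> list A;
  phi2 : list bool -> list bool -> list A;
  stopN : list A -> list A -> nat;
  psi : list A -> list A -> list nat
}.
Arguments phi1 {A k}. Arguments phi2 {A k}.
Arguments stopN {A k}. Arguments psi {A k}.

Definition Z1 {A k} (c : vl_code A k) (x : list bool * list bool * list bool) : list A :=
  let '(x1, _, x3) := x in phi1 c x1 x3.
Definition Z2 {A k} (c : vl_code A k) (x : list bool * list bool * list bool) : list A :=
  let '(_, x2, x3) := x in phi2 c x2 x3.
Definition Nval {A k} (c : vl_code A k) (x : list bool * list bool * list bool) : nat :=
  stopN c (Z1 c x) (Z2 c x).

(** N is a positive-integer-valued stopping time for the sequence of pairs
    (Z1(m), Z2(m)): N >= 1, the first N symbols of Z1, Z2 exist, and whether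
    N = n is determined by the first n pairs (Z1(m), Z2(m)), m <= n. *)
Definition is_stopping_time {A k} (c : vl_code A k) : Prop :=
  (forall x, In x (sources k) ->
     (1 <= Nval c x)%nat /\ (Nval c x <= length (Z1 c x))%nat
     /\ (Nval c x <= length (Z2 c x))%nat)
  /\ (forall x x', In x (sources k) -> In x' (sources k) ->
       (Nval c x <= length (Z1 c x'))%nat ->
       (Nval c x <= length (Z2 c x'))%nat ->
       firstn (Nval c x) (Z1 c x') = firstn (Nval c x) (Z1 c x) ->
       firstn (Nval c x) (Z2 c x') = firstn (Nval c x) (Z2 c x) ->
       Nval c x' = Nval c x).

(** Zero-error: the decoder output psi(Z1^N, Z2^N) equals X1+X2+X3 for every
    source outcome (all outcomes have positive probability). *)
Definition zero_error {A k} (c : vl_code A k) : Prop :=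
  is_stopping_time c /\
  forall x, In x (sources k) ->
    let '(x1, x2, x3) := x in
    psi c (firstn (Nval c x) (Z1 c x)) (firstn (Nval c x) (Z2 c x)) = sum3 x1 x2 x3.

(** Distribution of the stopping time: Pr(N = n) under uniform sources. *)
Definition Npmf {A k} (c : vl_code A k) (n : nat) : R :=
  INR (length (filter (fun x => Nat.eqb (Nval c x) n) (sources k))) / 2 ^ (3 * k).

(* Main.v *)
Require Import Defs.
From Stdlib Require Import Reals List Arith Lra Lia FinFun.
Import ListNotations.
Open Scope R_scope.

Lemma cv_const (B : R) : Un_cv (fun _ => B) B.
Proof. intros e He; exists 0%nat; intros; unfold Rdist; rewrite Rminus_diag, Rabs_R0; lra. Qed.

Lemma cv_le_bound U l B : Un_cv U l -> (forall n, U n <= B) -> l <= B.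
Proof. intros H1 H2; exact (Rle_cv_lim H2 H1 (cv_const B)). Qed.

Lemma cv_ge_bound U l B : Un_cv U l -> (forall n, B <= U n) -> B <= l.
Proof. intros H1 H2; exact (Rle_cv_lim H2 (cv_const B) H1). Qed.

Lemma sum_nonneg_grow f : (forall n, 0 <= f n) -> Un_growing (sum_f_R0 f).
Proof. intros H n; simpl; specialize (H (S n)); lra. Qed.

Lemma term_le_sum f n : (forall n, 0 <= f n) -> f n <= sum_f_R0 f n.
Proof. intros H; destruct n; simpl; [lra|]. pose proof (cond_pos_sum f n H); lra. Qed.

Lemma sum_lin (a b : R) u v N :
  sum_f_R0 (fun n => a * u n + b * v n) N = a * sum_f_R0 u N + b * sum_f_R0 v N.
Proof. induction N; simpl; [ring | rewrite IHN; ring]. Qed.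

Lemma exp_pow a n : exp a ^ n = exp (INR n * a).
Proof.
  induction n; simpl. rewrite Rmult_0_l, exp_0; auto.
  rewrite IHn, <- exp_plus. f_equal. destruct n; simpl; ring.
Qed.

Lemma ln2_pos : 0 < ln 2.
Proof. pose proof ln_lt_2; lra. Qed.

Lemma term_bound T x n : 0 <= T -> 0 <= x <= 1 ->
  0 <= - plogp x <= (T * (INR n * x) + 2 * exp (- T / 2) ^ n) / ln 2.
Proof.
  intros HT [Hx0 Hx1]. pose proof ln2_pos as L2.
  rewrite exp_pow.
  assert (Hr : 0 <= exp (INR n * (- T / 2))) by (left; apply exp_pos).
  assert (Hn : 0 <= INR n) by apply pos_INR.
  unfold plogp. destruct (Req_EM_T x 0) as [->|Hne].
  - rewrite Ropp_0. split; [lra|]. apply Rle_mult_inv_pos; [nra|lra].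
  - assert (Hxp : 0 < x) by lra.
    set (s := - ln x).
    assert (Hs : 0 <= s).
    { unfold s. destruct (Req_dec x 1) as [->|H1]. rewrite ln_1; lra.
      pose proof (ln_increasing x 1 Hxp ltac:(lra)); rewrite ln_1 in *; lra. }
    assert (E : - (x * log2 x) = x * s / ln 2) by (unfold log2, s; field; lra).
    rewrite E. split. apply Rle_mult_inv_pos; nra.
    apply Rmult_le_compat_r; [left; apply Rinv_0_lt_compat; lra|].
    destruct (Rle_lt_dec s (T * INR n)).
    + nra.
    + assert (Hxe : x = exp (- s)) by (unfold s; rewrite Ropp_involutive, exp_ln; auto).
      assert (H1 : s <= 2 * exp (s / 2)) by (pose proof (exp_ineq1_le (s/2)); lra).
      assert (H2 : exp (- s) = exp (- s / 2) * exp (- s / 2)) by (rewrite <- exp_plus; f_equal; lra).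
      assert (H3 : exp (s / 2) * exp (- s / 2) = 1) by (rewrite <- exp_plus, <- exp_0; f_equal; lra).
      assert (H4 : exp (- s / 2) <= exp (INR n * (- T / 2))).
      { destruct (Req_dec (- s / 2) (INR n * (- T / 2))) as [->|]; [lra|]. left; apply exp_increasing; nra. }
      assert (H5 : 0 < exp (- s / 2)) by apply exp_pos.
      assert (x * s <= 2 * exp (- s / 2)).
      { rewrite Hxe, H2. assert (s * exp (- s / 2) <= 2) by nra. nra. }
      assert (0 <= T * (INR n * x)) by (apply Rmult_le_pos; nra).
      lra.
Qed.

Lemma sum_trunc f M N :
  sum_f_R0 (fun n => f n * (if Nat.leb n M then 1 else 0)) N = sum_f_R0 f (Nat.min N M).
Proof.
  induction N.
  - simpl. replace (Nat.min 0 M) with 0%nat by lia. simpl. ring.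
  - rewrite tech5, IHN. destruct (Nat.leb_spec (S N) M).
    + replace (Nat.min (S N) M) with (S N) by lia. replace (Nat.min N M) with N by lia. rewrite tech5; ring.
    + replace (Nat.min (S N) M) with M by lia. replace (Nat.min N M) with M by lia. ring.
Qed.

Lemma sum_mono f a b : (forall n, 0 <= f n) -> (a <= b)%nat -> sum_f_R0 f a <= sum_f_R0 f b.
Proof.
  intros Hf Hab. induction b.
  - replace a with 0%nat by lia. lra.
  - destruct (Nat.eq_dec a (S b)) as [->|Hne]; [lra|].
    simpl. specialize (IHb ltac:(lia)). specialize (Hf (S b)). lra.
Qed.

Lemma part1 (Q : R) (HQ : 0 <= Q) (eps : R) (He : 0 < eps) :
  exists k0 : nat, forall k : nat, (k0 <= k)%nat ->
    forall (p : nat -> R) (m : R),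
        is_pmf_pos p -> mean_is p m ->
        (forall n : nat, (1 <= n)%nat -> p n <= (3 / 8) ^ k * Q ^ (2 * n)) ->
        exists h : R, entropy_is p h /\ h / m <= eps.
Proof.
  pose proof ln2_pos as L2.
  set (T := eps * ln 2 / 2).
  assert (HT : 0 < T) by (unfold T; nra).
  set (r := exp (- T / 2)).
  assert (Hr0 : 0 < r) by apply exp_pos.
  assert (Hr1 : r < 1) by (unfold r; rewrite <- exp_0; apply exp_increasing; lra).
  set (C := 2 / ln 2 / (1 - r)).
  assert (HC : 0 < C) by (unfold C; apply Rdiv_lt_0_compat; [apply Rdiv_lt_0_compat|]; lra).
  destruct (INR_unbounded (4 * C / eps + 1)) as [M HM].
  set (SS := sum_f_R0 (fun n => Q ^ (2 * n)) M).
  assert (HS : 0 <= SS) by (apply cond_pos_sum; intros; apply pow_le; auto).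
  destruct (pow_lt_1_zero (3/8) ltac:(rewrite Rabs_right; lra) (/ (2 * (SS + 1))))
    as [k0 Hk0]; [apply Rinv_0_lt_compat; lra|].
  exists k0. intros k Hk p m [Hp0 [Hpos Hsum]] Hm Hb.
  set (c := (3/8)^k) in *.
  assert (Hc0 : 0 <= c) by (apply pow_le; lra).
  assert (HcS : c * SS <= / 2).
  { specialize (Hk0 k Hk). fold c in Hk0. rewrite Rabs_right in Hk0 by lra.
    assert (c * (2 * (SS + 1)) < 1).
    { apply (Rmult_lt_compat_r (2 * (SS + 1))) in Hk0; [|lra].
      rewrite Rinv_l in Hk0; lra. }
    nra. }
  assert (HpN : forall n, p n <= 1).
  { intros n. pose proof (term_le_sum p n Hpos).
    pose proof (growing_ineq _ _ (sum_nonneg_grow p Hpos) Hsum n). lra. }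
  assert (Hnp : forall n, 0 <= INR n * p n) by (intros; apply Rmult_le_pos; [apply pos_INR|auto]).
  set (b := fun n => c * Q ^ (2 * n) * (if Nat.leb n M then 1 else 0)).
  assert (Hterm : forall n, INR M * p n + (- INR M) * b n <= INR n * p n).
  { intros n. unfold b. pose proof (pos_INR M). destruct (Nat.leb_spec n M).
    - destruct n. { rewrite Hp0. simpl. assert (0 <= c * 1 * 1) by lra. nra. }
      specialize (Hb (S n) ltac:(lia)). specialize (Hnp (S n)). nra.
    - assert (INR M <= INR n) by (apply le_INR; lia). specialize (Hpos n). nra. }
  assert (Hsb : forall N, sum_f_R0 b N <= c * SS).
  { intros N. unfold b. rewrite sum_trunc. unfold SS. rewrite scal_sum.
    eapply Rle_trans; [apply sum_mono with (b := M); [intros; apply Rmult_le_pos; [auto|apply pow_le; auto]|lia]|].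
    right. apply sum_eq. intros; ring. }
  assert (HmM : INR M / 2 <= m).
  { assert (Hcv : Un_cv (fun N => INR M * sum_f_R0 p N - INR M / 2) (INR M * 1 - INR M / 2)).
    { apply CV_minus; [apply CV_mult; [apply cv_const|exact Hsum]|apply cv_const]. }
    assert (INR M * 1 - INR M / 2 <= m); [|lra].
    refine (Rle_cv_lim _ Hcv Hm). intros N.
    pose proof (sum_Rle _ _ N (fun n _ => Hterm n)) as H1.
    rewrite sum_lin in H1. pose proof (Hsb N). pose proof (pos_INR M). nra. }
  assert (0 <= 4 * C / eps) by (apply Rle_mult_inv_pos; lra).
  assert (Hm0 : 0 < m) by lra.
  set (E := sum_f_R0 (fun n => - plogp (p n))).
  assert (Hent : forall n, 0 <= - plogp (p n) <= (T * (INR n * p n) + 2 * r ^ n) / ln 2).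
  { intros n. apply term_bound; [lra|split; auto]. }
  assert (HEg : Un_growing E) by (apply sum_nonneg_grow; intros; apply Hent).
  assert (HEb : forall N, E N <= eps * m / 2 + C).
  { intros N. unfold E.
    eapply Rle_trans.
    { apply (sum_Rle _ (fun n => (T / ln 2) * (INR n * p n) + (2 / ln 2) * r ^ n)).
      intros n _. destruct (Hent n) as [_ Hx]. eapply Rle_trans; [exact Hx|]. right; field; lra. }
    rewrite sum_lin, tech3 by lra.
    pose proof (growing_ineq _ _ (sum_nonneg_grow _ Hnp) Hm N).
    assert (0 <= r ^ S N) by (apply pow_le; lra).
    assert ((1 - r ^ S N) / (1 - r) <= 1 / (1 - r)).
    { unfold Rdiv. apply Rmult_le_compat_r; [left; apply Rinv_0_lt_compat|]; lra. }
    assert (T / ln 2 = eps / 2) by (unfold T; field; lra).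
    assert (2 / ln 2 * (1 / (1 - r)) = C) by (unfold C; field; lra).
    assert (0 <= 2 / ln 2) by (apply Rle_mult_inv_pos; lra).
    nra. }
  destruct (growing_cv E HEg) as [h Hh].
  { exists (eps * m / 2 + C). intros x [N ->]. apply HEb. }
  exists h. split; [exact Hh|].
  assert (Hh2 : h <= eps * m / 2 + C) by (apply (cv_le_bound E); auto).
  assert (HCm : C <= eps * m / 2).
  { assert (4 * C / eps <= 2 * m) by lra.
    assert (4 * C <= 2 * m * eps).
    { replace (4 * C) with (4 * C / eps * eps) by (field; lra). nra. }
    lra. }
  replace eps with (eps * m / m) by (field; lra).
  unfold Rdiv. apply Rmult_le_compat_r; [left; apply Rinv_0_lt_compat; lra|]. lra.
Qed.
Lemma bitvecs_in k v : In v (bitvecs k) -> length v = k.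
Proof.
  revert v; induction k; simpl; intros v H.
  - destruct H as [<-|[]]; reflexivity.
  - apply in_flat_map in H as [w [Hw Hv]]. simpl in Hv.
    destruct Hv as [<-|[<-|[]]]; simpl; f_equal; auto.
Qed.

Lemma bitvecs_in' k v : length v = k -> In v (bitvecs k).
Proof.
  revert v; induction k; simpl; intros v H.
  - destruct v; [auto|discriminate].
  - destruct v as [|b v]; [discriminate|]. simpl in H. apply in_flat_map.
    exists v. split; [apply IHk; lia|]. destruct b; simpl; auto.
Qed.

Lemma bitvecs_length k : length (bitvecs k) = (2 ^ k)%nat.
Proof.
  induction k; simpl; auto.
  assert (forall l : list (list bool), length (flat_map (fun v => [false :: v; true :: v]) l) = (2 * length l)%nat).
  { induction l; simpl; auto. rewrite IHl. lia. }
  rewrite H, IHk. lia.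
Qed.

Lemma bitvecs_nodup k : NoDup (bitvecs k).
Proof.
  induction k; simpl. constructor; [simpl; tauto|constructor].
  induction IHk as [|v l Hv Hl IH]; simpl. constructor.
  constructor.
  - intros [H|H]; [discriminate|]. apply in_flat_map in H as [w [Hw Hv']].
    simpl in Hv'; destruct Hv' as [E|[E|[]]]; inversion E; subst; tauto.
  - constructor; auto.
    intros H'. apply in_flat_map in H' as [w [Hw Hv']].
    simpl in Hv'; destruct Hv' as [E|[E|[]]]; inversion E; subst; tauto.
Qed.

Lemma nodup_prod {X Y : Type} (l : list X) (l' : list Y) :
  NoDup l -> NoDup l' -> NoDup (list_prod l l').
Proof.
  intros H1 H2. induction H1; simpl. constructor.
  apply NoDup_app; auto.
  - apply FinFun.Injective_map_NoDup; auto. intros a b E; inversion E; auto.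
  - intros [a b] Ha Hb. apply in_map_iff in Ha as [y [E _]]. inversion E; subst.
    apply in_prod_iff in Hb; tauto.
Qed.

Fixpoint words {A : Type} (zl : list A) (n : nat) : list (list A) :=
  match n with
  | O => [[]]
  | S n' => flat_map (fun w => map (fun a => a :: w) zl) (words zl n')
  end.

Lemma words_length {A : Type} (zl : list A) n : length (words zl n) = (length zl ^ n)%nat.
Proof.
  induction n; simpl; auto.
  assert (forall l : list (list A), length (flat_map (fun w => map (fun a => a :: w) zl) l) = (length l * length zl)%nat).
  { induction l; simpl; auto. rewrite length_app, length_map, IHl. lia. }
  rewrite H, IHn. lia.
Qed.

Lemma words_in {A : Type} (zl : list A) (Hfull : forall a, In a zl) n w :
  length w = n -> In w (words zl n).
Proof.
  revert w; induction n; intros w H; simpl.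
  - destruct w; [auto|discriminate].
  - destruct w as [|a w]; [discriminate|]. apply in_flat_map. exists w.
    split; [apply IHn; simpl in H; lia|]. apply in_map_iff; exists a; auto.
Qed.

Lemma bitval_inj a b x : (bitval a + x = bitval b + x)%nat -> a = b.
Proof. destruct a, b; simpl; intros; auto; lia. Qed.

Lemma sum3_inj2 x1 x2 x2' x3 : length x2 = length x1 -> length x2' = length x1 ->
  length x3 = length x1 -> sum3 x1 x2 x3 = sum3 x1 x2' x3 -> x2 = x2'.
Proof.
  revert x2 x2' x3; induction x1 as [|b1 x1 IH]; intros x2 x2' x3 L2 L2' L3 E.
  - destruct x2, x2'; simpl in *; auto; lia.
  - destruct x2 as [|b2 x2], x2' as [|b2' x2'], x3 as [|b3 x3]; simpl in *; try lia.
    injection E as E1 E2. f_equal.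
    + destruct b1, b2, b2', b3; simpl in E1; auto; lia.
    + apply (IH _ _ x3); auto; lia.
Qed.

Lemma sum3_inj1 x1 x1' x2 x3 : length x1' = length x1 -> length x2 = length x1 ->
  length x3 = length x1 -> sum3 x1 x2 x3 = sum3 x1' x2 x3 -> x1 = x1'.
Proof.
  revert x1' x2 x3; induction x1 as [|b1 x1 IH]; intros x1' x2 x3 L1 L2 L3 E.
  - destruct x1'; simpl in *; auto; lia.
  - destruct x1' as [|b1' x1'], x2 as [|b2 x2], x3 as [|b3 x3]; simpl in *; try lia.
    injection E as E1 E2. f_equal.
    + destruct b1, b1', b2, b3; simpl in E1; auto; lia.
    + apply (IH _ x2 x3); auto; lia.
Qed.

Lemma sources_in k x1 x2 x3 : In (x1, x2, x3) (sources k) <->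
  length x1 = k /\ length x2 = k /\ length x3 = k.
Proof.
  unfold sources. rewrite !in_prod_iff. split.
  - intros [[H1 H2] H3]. repeat split; eapply bitvecs_in; eauto.
  - intros [H1 [H2 H3]]. repeat split; apply bitvecs_in'; auto.
Qed.

Lemma inj_core {A : Type} k (c : vl_code A k) n x x' : zero_error c ->
  In x (sources k) -> In x' (sources k) -> Nval c x = n -> Nval c x' = n ->
  firstn n (Z1 c x) = firstn n (Z1 c x') -> firstn n (Z2 c x) = firstn n (Z2 c x') ->
  snd x = snd x' -> x = x'.
Proof.
  intros [[Hst1 Hst2] Hze] Hx Hx' Nx Nx' F1 F2 E3.
  destruct x as [[x1 x2] x3], x' as [[x1' x2'] x3']. simpl in E3. subst x3'.
  pose proof Hx as Lx. pose proof Hx' as Lx'.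
  apply sources_in in Lx as [L1 [L2 L3]]. apply sources_in in Lx' as [L1' [L2' _]].
  set (y := (x1, x2', x3)).
  assert (Hy : In y (sources k)) by (apply sources_in; auto).
  assert (EZ1 : Z1 c y = Z1 c (x1, x2, x3)) by reflexivity.
  assert (EZ2 : Z2 c y = Z2 c (x1', x2', x3)) by reflexivity.
  destruct (Hst1 _ Hx) as [_ [Lz1 Lz2]]. destruct (Hst1 _ Hx') as [_ [Lz1' Lz2']].
  assert (Ny : Nval c y = Nval c (x1, x2, x3)).
  { apply Hst2; auto; unfold y; cbn [Z1 Z2] in *.
    - lia.
    - rewrite Nx. auto. }
  pose proof (Hze _ Hy) as Zy. pose proof (Hze _ Hx) as Zx. pose proof (Hze _ Hx') as Zx'.
  cbv beta iota in Zy, Zx, Zx'.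
  rewrite Ny, EZ1, EZ2, Nx, <- F2 in Zy. rewrite Nx in Zx.
  rewrite Zx in Zy.
  assert (x2 = x2') by (apply (sum3_inj2 x1 x2 x2' x3); auto; lia). subst x2'.
  rewrite Nx', <- F1, <- F2, Zx in Zx'.
  assert (x1 = x1') by (apply (sum3_inj1 x1 x1' x2 x3); auto; lia). subst. reflexivity.
Qed.

Lemma filter_nil' {T : Type} (f : T -> bool) L : (forall x, In x L -> f x = false) -> filter f L = [].
Proof. induction L; simpl; intros H; auto. rewrite H by auto. apply IHL; auto. Qed.

Lemma fin_sum f K : (forall n, (K < n)%nat -> f n = 0) -> infinite_sum f (sum_f_R0 f K).
Proof.
  intros Hf e He. exists K. intros n Hn.
  assert (forall d, sum_f_R0 f (K + d) = sum_f_R0 f K).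
  { induction d. rewrite Nat.add_0_r; auto.
    replace (K + S d)%nat with (S (K + d)) by lia. rewrite tech5, IHd, Hf by lia. ring. }
  replace n with (K + (n - K))%nat by lia. rewrite H. unfold Rdist.
  rewrite Rminus_diag, Rabs_R0. lra.
Qed.

Lemma len_filter_cons {T : Type} (f : T -> bool) x L :
  INR (length (filter f (x :: L))) = (if f x then 1 else 0) + INR (length (filter f L)).
Proof. simpl. destruct (f x); simpl length; [rewrite S_INR|]; ring. Qed.

Lemma ind_sum0 j K : (K < j)%nat -> sum_f_R0 (fun n => if Nat.eqb j n then 1 else 0) K = 0.
Proof.
  induction K; intros H; simpl.
  - destruct j; [lia|reflexivity].
  - rewrite IHK by lia. destruct (Nat.eqb_spec j (S K)); [lia|ring].
Qed.

Lemma ind_sum1 j K : (j <= K)%nat -> sum_f_R0 (fun n => if Nat.eqb j n then 1 else 0) K = 1.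
Proof.
  induction K; intros H; simpl.
  - replace j with 0%nat by lia. reflexivity.
  - destruct (Nat.eqb_spec j (S K)).
    + rewrite ind_sum0 by lia. ring.
    + rewrite IHK by lia. ring.
Qed.

Lemma count_sum {T : Type} (g : T -> nat) L K : (forall x, In x L -> (g x <= K)%nat) ->
  sum_f_R0 (fun n => INR (length (filter (fun x => Nat.eqb (g x) n) L))) K = INR (length L).
Proof.
  induction L as [|x L IH]; intros H.
  - simpl. clear H. induction K; simpl; auto. rewrite IHK. ring.
  - rewrite (sum_eq _ (fun n => (if Nat.eqb (g x) n then 1 else 0) +
       INR (length (filter (fun x => Nat.eqb (g x) n) L)))).
    2:{ intros i _. apply (len_filter_cons (fun y => Nat.eqb (g y) i)). }
    rewrite sum_plus, ind_sum1, IH by (simpl in H; auto). simpl length. rewrite S_INR. ring.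
Qed.

Lemma maxN {T : Type} (g : T -> nat) L x : In x L ->
  (g x <= fold_right (fun y acc => Nat.max (g y) acc) 0%nat L)%nat.
Proof. induction L; simpl; [tauto|]. intros [->|H]; [lia|]. specialize (IHL H). lia. Qed.

Lemma count_bound {A : Type} (zl : list A) (Hfull : forall a, In a zl) k (c : vl_code A k) n :
  zero_error c ->
  (length (filter (fun x => Nat.eqb (Nval c x) n) (sources k)) <=
     length zl ^ n * length zl ^ n * 2 ^ k)%nat.
Proof.
  intros Hz.
  set (F := filter (fun x => Nat.eqb (Nval c x) n) (sources k)).
  set (f := fun x => (firstn n (Z1 c x), firstn n (Z2 c x), snd x)).
  rewrite <- (words_length zl n), <- bitvecs_length, <- !length_prod.
  rewrite <- (length_map f F).
  apply NoDup_incl_length.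
  - apply NoDup_map_NoDup_ForallPairs.
    + intros x x' Hx Hx' E. unfold F in Hx, Hx'. apply filter_In in Hx as [Hx Nx], Hx' as [Hx' Nx'].
      apply Nat.eqb_eq in Nx, Nx'. unfold f in E. injection E as E1 E2 E3.
      eapply inj_core; eauto.
    + apply NoDup_filter. unfold sources. repeat apply nodup_prod; apply bitvecs_nodup.
  - intros y Hy. apply in_map_iff in Hy as [x [<- Hx]].
    unfold F in Hx. apply filter_In in Hx as [Hx Nx]. apply Nat.eqb_eq in Nx.
    destruct Hz as [[Hst1 _] _]. destruct (Hst1 x Hx) as [_ [L1 L2]].
    destruct x as [[x1 x2] x3]. apply sources_in in Hx as [_ [_ L3]].
    unfold f. apply in_prod_iff. split; [apply in_prod_iff; split|].
    + apply words_in; auto. apply firstn_length_le. lia.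
    + apply words_in; auto. apply firstn_length_le. lia.
    + apply bitvecs_in'; auto.
Qed.

Lemma quarter_pow k : (/ 4) ^ k * (2 ^ k * 2 ^ k) = 1.
Proof.
  rewrite <- Rmult_assoc, <- !Rpow_mult_distr.
  replace (/ 4 * 2 * 2) with 1 by field. apply pow1.
Qed.

Theorem lemma1 (A : Type) (zl : list A) (Hnd : NoDup zl)
    (Hfull : forall a : A, In a zl) (H2 : (2 <= length zl)%nat) :
  forall eps : R, 0 < eps ->
  exists k0 : nat, forall k : nat, (k0 <= k)%nat ->
    (forall (p : nat -> R) (m : R),
        is_pmf_pos p -> mean_is p m ->
        (forall n : nat, (1 <= n)%nat -> p n <= (3 / 8) ^ k * INR (length zl) ^ (2 * n)) ->
        exists h : R, entropy_is p h /\ h / m <= eps)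
    /\
    (forall c : vl_code A k, zero_error c ->
        exists m h : R, mean_is (Npmf c) m /\ entropy_is (Npmf c) h /\ h / m <= eps).
Proof.
  intros eps He.
  destruct (part1 (INR (length zl)) (pos_INR _) eps He) as [k0 Hk0].
  exists k0. intros k Hk. split; [apply Hk0; auto|].
  intros c Hz.
  set (L := sources k).
  set (K := fold_right (fun y acc => Nat.max (Nval c y) acc) 0%nat L).
  assert (HK : forall x, In x L -> (Nval c x <= K)%nat) by (intros; apply maxN; auto).
  assert (H8 : 0 < 2 ^ (3 * k)) by (apply pow_lt; lra).
  assert (Hzero : forall n, (K < n)%nat -> Npmf c n = 0).
  { intros n Hn. unfold Npmf. rewrite filter_nil'; [simpl length; rewrite INR_0; unfold Rdiv; ring|].
    intros x Hx. apply Nat.eqb_neq. specialize (HK x Hx). lia. }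
  assert (H2k : 2 ^ (3 * k) = 2 ^ k * 2 ^ k * 2 ^ k).
  { replace (3 * k)%nat with (k + k + k)%nat by lia. rewrite !pow_add. ring. }
  assert (HL : INR (length L) = 2 ^ k * 2 ^ k * 2 ^ k).
  { unfold L, sources. rewrite !length_prod, !bitvecs_length, !mult_INR, !pow_INR.
    replace (INR 2) with 2 by (simpl; ring). ring. }
  assert (Hpmf : is_pmf_pos (Npmf c)).
  { split; [|split].
    - unfold Npmf. rewrite filter_nil'; [simpl length; rewrite INR_0; unfold Rdiv; ring|].
      intros x Hx. destruct Hz as [[Hst1 _] _]. destruct (Hst1 x Hx) as [H1 _].
      apply Nat.eqb_neq. lia.
    - intros n. unfold Npmf, Rdiv. apply Rle_mult_inv_pos; [apply pos_INR|auto].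
    - replace 1 with (sum_f_R0 (Npmf c) K); [apply fin_sum; auto|].
      transitivity (/ 2 ^ (3 * k) * sum_f_R0 (fun n => INR (length (filter (fun x => Nat.eqb (Nval c x) n) L))) K).
      + rewrite scal_sum. apply sum_eq. intros; unfold Npmf, Rdiv, L; ring.
      + rewrite count_sum by auto. rewrite HL, H2k. field.
        assert (0 < 2 ^ k) by (apply pow_lt; lra). lra. }
  assert (Hmean : mean_is (Npmf c) (sum_f_R0 (fun n => INR n * Npmf c n) K)).
  { apply fin_sum. intros n Hn. rewrite Hzero by auto. ring. }
  assert (Hb : forall n, (1 <= n)%nat -> Npmf c n <= (3 / 8) ^ k * INR (length zl) ^ (2 * n)).
  { intros n _. pose proof (count_bound zl Hfull k c n Hz) as Hc.
    apply le_INR in Hc. rewrite !mult_INR, !pow_INR in Hc.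
    replace (INR 2) with 2 in Hc by (simpl; ring).
    set (q := INR (length zl)) in *.
    assert (Hq : 0 <= q ^ n) by (apply pow_le; apply pos_INR).
    assert (P2 : 0 < 2 ^ k) by (apply pow_lt; lra).
    replace (2 * n)%nat with (n + n)%nat by lia. rewrite pow_add.
    unfold Npmf. fold L. rewrite H2k.
    assert (Hq4 : (/ 4) ^ k <= (3 / 8) ^ k) by (apply pow_incr; lra).
    assert (E : q ^ n * q ^ n * 2 ^ k / (2 ^ k * 2 ^ k * 2 ^ k) = q ^ n * q ^ n * (/ 4) ^ k).
    { assert (Hinv : (/ 4) ^ k = / (2 ^ k * 2 ^ k)).
      { apply (Rmult_eq_reg_r (2 ^ k * 2 ^ k)); [|nra].
        rewrite quarter_pow, Rinv_l; [reflexivity|nra]. }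
      rewrite Hinv. field. lra. }
    eapply Rle_trans with (q ^ n * q ^ n * 2 ^ k / (2 ^ k * 2 ^ k * 2 ^ k)).
    - unfold Rdiv. apply Rmult_le_compat_r; [left; apply Rinv_0_lt_compat; nra|]. unfold L. lra.
    - rewrite E. assert (0 <= q ^ n * q ^ n) by nra. nra. }
  destruct (Hk0 k Hk (Npmf c) _ Hpmf Hmean Hb) as [h [Hh Hr]].
  exists (sum_f_R0 (fun n => INR n * Npmf c n) K), h. auto.
Qed.
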